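(* Let $k\ge1$, and let $\mathcal P=\{p_1,\dots,p_{k^2}\}$ be a family of real polynomials in the commuting variables $x_1,\dots,x_{2k^2}$ admitting an nc representation $p(X,Y)$ of degree $d>1$. Let $t\ge2$ and suppose $$p(X,Y)=d_1X^t+d_2X^{t-1}Y+d_3YX^{t-1}+q(X,Y),$$ where $q$ contains no scalar multiples of $X^t,X^{t-1}Y,YX^{t-1}$, and $d_1,d_2,d_3$ are pairwise distinct. If $x_u$ is a diagonal entry of $X$, then the family contains (counting over all polynomials) exactly: $2k-2$ terms $d_1x_u^{t-1}x_v$ with $x_v\ne x_u$ if $d_1\ne0$; $k-1$ terms $d_2x_u^{t-1}x_v$ with $x_v$ an off-diagonal entry of $Y$ if $d_2\ne0$; $k-1$ terms $d_3x_u^{t-1}x_v$ with $x_v$ an off-diagonal entry of $Y$ if $d_3\ne0$; and $1$ term $\varphi(t-1,1)x_u^{t-1}x_v$ with $x_v$ a diagonal entry of $Y$ if $\varphi(t-1,1)\ne0$. These account for all two letter terms of degree $t$ in which $x_u$ has degree $t-1$, and no two terms in this list are the same. Moreover, if $x_u$ is in position $(a,a)$ of $X$ and $p_{ab}$ denotes the polynomial in position $(a,b)$ of the array $p(X,Y)$, then for $b\ne a$, $$p_{ab}=d_1x_u^{t-1}x_v+d_2x_u^{t-1}x_w+\cdots,$$ where $x_v$ (resp. $x_w$) is the $(a,b)$ entry of $X$ (resp. $Y$) and $p_{ab}$ contains no other two letter monomials of degree $t$ having $x_u^{t-1}$ as a factor; and similarly $$p_{ba}=d_1x_u^{t-1}x_m+d_3x_u^{t-1}x_n+\cdots,$$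 where $x_m$ (resp. $x_n$) is the $(b,a)$ entry of $X$ (resp. $Y$) and $p_{ba}$ contains no other two letter monomials of degree $t$ having $x_u^{t-1}$ as a factor.
   Context: The family $\mathcal P$ admits an nc representation $p(X,Y)$ if there are $k\times k$ matrices $X,Y$ whose $2k^2$ entries are the variables $x_1,\dots,x_{2k^2}$, each used exactly once, and a noncommutative polynomial $p$ in two letters with real coefficients such that the matrix $p(X,Y)$ is a $k\times k$ array whose entries are $p_1,\dots,p_{k^2}$, each exactly once. A ''term'' means a monomial with its nonzero coefficient after collecting like terms. $\varphi(i,j)$ is the sum of coefficients of all monomials of $p$ of degree $i$ in $X$ and $j$ in $Y$. *)

(* Defs.v *)
From HB Require Import structures.
From mathcomp Require Import all_boot all_order all_algebra.
From mathcomp Require Import mpoly.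
Set Implicit Arguments. Unset Strict Implicit. Unset Printing Implicit Defensive.
Import Order.TTheory GRing.Theory Num.Theory.
Local Open Scope ring_scope.

(* A noncommutative polynomial in two letters X, Y is a coefficient function
   on words; a word is a [seq bool] with [true] = X and [false] = Y, read
   left to right.  Finite support is imposed in the theorem (via its degree). *)
Definition ncpoly (R : Type) := seq bool -> R.

(* Placement of the variables x_0 .. x_{2k^2-1} in the matrices:
   [pos (true, i, j)] is the index of the variable in entry (i,j) of X,
   [pos (false, i, j)] the one in entry (i,j) of Y. *)
Section Eval.
Variables (R : realFieldType) (k : nat).
Local Notation n := (2 * k ^ 2)%N.
Variable pos : bool * 'I_k * 'I_k -> 'I_n.

Definition varmx (b : bool) : 'M[{mpoly R[n]}]_k :=
  \matrix_(i, j) 'X_(pos (b, i, j)).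

Definition mxword (w : seq bool) : 'M[{mpoly R[n]}]_k :=
  foldr (fun b M => varmx b *m M) 1%:M w.

Definition ncentry (p : ncpoly R) (d : nat) (i j : 'I_k) : {mpoly R[n]} :=
  \sum_(m < d.+1) \sum_(w : m.-tuple bool) p w *: mxword w i j.

Definition coef2 (P : {mpoly R[n]}) (u : 'I_n) (e : nat) (v : 'I_n) : R :=
  mcoeff (mnm_add (mnm_muln (mnm1 u) e) (mnm1 v)) P.

Definition isXentry (v : 'I_n) : bool := [exists i, exists j, pos (true, i, j) == v].
Definition isYoffdiag (v : 'I_n) : bool :=
  [exists i, exists j, (i != j) && (pos (false, i, j) == v)].
Definition isYdiag (v : 'I_n) : bool := [exists i, pos (false, i, i) == v].
End Eval.

Definition phi (R : realFieldType) (p : ncpoly R) (i j : nat) : R :=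
  \sum_(w : (i + j).-tuple bool | count id w == i) p w.

Definition ncdeg (R : realFieldType) (p : ncpoly R) (d : nat) : Prop :=
  (forall w : seq bool, (d < size w)%N -> p w = 0) /\
  (exists w : seq bool, size w = d /\ p w != 0).

(* Main.v *)
Require Import Defs.
From HB Require Import structures.
From mathcomp Require Import all_boot all_order all_algebra.
From mathcomp Require Import mpoly.
Import Order.TTheory GRing.Theory Num.Theory.
Set Implicit Arguments. Unset Strict Implicit. Unset Printing Implicit Defensive.
Local Open Scope ring_scope.

Lemma cXM1 (R : realFieldType) N (x : 'I_N) (P : {mpoly R[N]}) m :
  ('X_x * P)@_(mnm_add (mnm1 x) m) = P@_m.
Proof. by rewrite mulrC mcoeffMX. Qed.
Lemma cXM0 (R : realFieldType) N (x : 'I_N) (P : {mpoly R[N]}) (m : 'X_{1..N}) :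
  m x = 0%N -> ('X_x * P)@_m = 0.
Proof.
move=> hm; rewrite mcoeffM; apply: big1 => kk /eqP e.
rewrite mcoeffX; case: eqP => [e2|]; last by rewrite mul0r.
have := congr1 (fun mm : 'X_{1..N} => mm x) e => /=.
by rewrite hm mnmDE -e2 mnm1E eqxx.
Qed.

Lemma mxword_cons (R : realFieldType) k (pos : bool * 'I_k * 'I_k -> 'I_(2 * k ^ 2)) b w i j :
  mxword R pos (b :: w) i j = \sum_l 'X_(pos (b, i, l)) * mxword R pos w l j.
Proof. by rewrite /= mxE; apply: eq_bigr => l _; rewrite /varmx mxE. Qed.

Lemma mxword_nil (R : realFieldType) k (pos : bool * 'I_k * 'I_k -> 'I_(2 * k ^ 2)) i j :
  mxword R pos [::] i j = (i == j)%:R.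
Proof. by rewrite /= mxE. Qed.

Lemma coef_natb (R : realFieldType) N (b : bool) (m : 'X_{1..N}) :
  ((b%:R : {mpoly R[N]})@_m) = (b && (m == 0%MM))%:R.
Proof. by case: b; rewrite /= ?mcoeff1 ?mcoeff0. Qed.

Lemma Nm_eval N (u x : 'I_N) n : (mnm_muln (mnm1 u) n) x = ((u == x) * n)%N.
Proof. by rewrite mulmnE mnm1E. Qed.

Lemma Nm_eq0 N (u : 'I_N) n : (mnm_muln (mnm1 u) n == 0%MM) = (n == 0%N).
Proof.
apply/eqP/eqP => [e|->]; last by rewrite mulm0n.
by have := congr1 (fun mm : 'X_{1..N} => mm u) e; rewrite /= Nm_eval eqxx mul1n mnmE.
Qed.

Lemma cXMz (R : realFieldType) N (u x : 'I_N) (P : {mpoly R[N]}) :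
  ('X_x * P)@_(mnm_muln (mnm1 u) 0) = 0.
Proof. by apply: cXM0; rewrite Nm_eval muln0. Qed.
Lemma cXMne (R : realFieldType) N (u x : 'I_N) n (P : {mpoly R[N]}) : u != x ->
  ('X_x * P)@_(mnm_muln (mnm1 u) n) = 0.
Proof. by move=> h; apply: cXM0; rewrite Nm_eval (negbTE h). Qed.

Lemma Acoef (R : realFieldType) k (pos : bool * 'I_k * 'I_k -> 'I_(2 * k ^ 2))
  (posI : injective pos) (a : 'I_k) w i j n :
  (mxword R pos w i j)@_(mnm_muln (mnm1 (pos (true, a, a))) n) =
  [&& n == size w, all id w, i == j & (w == [::]) || (i == a)]%:R.
Proof.
elim: w i j n => [|b w IH] i j n.
  by rewrite mxword_nil coef_natb Nm_eq0 /= andbT andbC.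
rewrite mxword_cons raddf_sum (bigD1 a) //= big1 ?addr0; last first.
  move=> l hl; apply: cXM0; rewrite Nm_eval.
  case: eqP => //= /posI [] _ _ e; by rewrite e eqxx in hl.
case: n => [|n].
  by rewrite cXMz.
case: b; last first.
  rewrite cXMne ?andbF //; apply/negP => /eqP /posI; done.
case: (eqVneq i a) => [->|hia]; last first.
  rewrite cXMne ?andbF //; apply/negP => /eqP /posI [] e; by rewrite e eqxx in hia.
by rewrite mulmS cXM1 IH /= eqSS eqxx orbT !andbT.
Qed.

Definition cnd k (a r s : 'I_k) (l sz : nat) (i j : 'I_k) : bool :=
  (if l == 0%N then i == r else (i == a) && (r == a)) &&
  (if l == sz.-1 then j == s else (s == a) && (j == a)).

Definition sn (sz l : nat) (L : bool) := set_nth true (nseq sz true) l L.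

Lemma cndS k (a r s : 'I_k) l m i j : (l < m)%N ->
  cnd a r s l.+1 m.+1 i j = (i == a) && cnd a r s l m a j.
Proof.
case: m => // m _; rewrite /cnd /= eqSS.
by case: (l == 0)%N; rewrite ?eqxx //= ?andbA // [r == a]eq_sym.
Qed.

Lemma sum_pick (R : realFieldType) k (c : bool) (a : 'I_k) (F : 'I_k -> R) :
  \sum_l ((c && (l == a))%:R * F l) = c%:R * F a.
Proof.
rewrite (bigD1 a) //= big1 ?addr0 ?eqxx ?andbT // => l /negbTE ->.
by rewrite andbF mul0r.
Qed.

Lemma Mm_eval N (u v x : 'I_N) n :
  (mnm_add (mnm_muln (mnm1 u) n) (mnm1 v)) x = ((u == x) * n + (v == x))%N.
Proof. by rewrite mnmDE Nm_eval mnm1E. Qed.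

Lemma nseq_all (w : seq bool) : (w == nseq (size w) true) = all id w.
Proof. by elim: w => //= b w IH; rewrite eqseq_cons IH; case: b. Qed.

Lemma bump0n l : bump 0 l = l.+1. Proof. by []. Qed.

Lemma natb_eq (R : realFieldType) (b1 b2 : bool) : b1 = b2 -> (b1%:R : R) = b2%:R.
Proof. by move->. Qed.

Lemma Bcoef (R : realFieldType) k (pos : bool * 'I_k * 'I_k -> 'I_(2 * k ^ 2))
  (posI : injective pos) (a : 'I_k) (L : bool) (r s : 'I_k)
  (hv : pos (L, r, s) != pos (true, a, a)) w i j n :
  (mxword R pos w i j)@_(mnm_add (mnm_muln (mnm1 (pos (true, a, a))) n) (mnm1 (pos (L, r, s)))) =
  \sum_(l < size w) [&& size w == n.+1, w == sn (size w) l L & cnd a r s l (size w) i j]%:R.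
Proof.
set u := pos (true, a, a) in hv *; set v := pos (L, r, s) in hv *.
have huv : (u == v) = false by rewrite eq_sym (negbTE hv).
elim: w i j n => [|b w IH] i j n.
  rewrite mxword_nil coef_natb big_ord0.
  case: (boolP (_ == 0%MM)) => [/eqP e|]; last by rewrite andbF.
  by have := congr1 (fun mm : 'X_{1..(2 * k ^ 2)} => mm v) e; rewrite /= Mm_eval eqxx huv addn1 mnmE.
rewrite mxword_cons raddf_sum.
pose G (l : 'I_k) := if n is n'.+1 then (mxword R pos w l j)@_(mnm_add (mnm_muln (mnm1 u) n') (mnm1 v)) else 0.
pose H (l : 'I_k) := (mxword R pos w l j)@_(mnm_muln (mnm1 u) n).
have pt : forall l, ('X_(pos (b, i, l)) * mxword R pos w l j)@_(mnm_add (mnm_muln (mnm1 u) n) (mnm1 v))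
   = ([&& b, i == a & true] && (l == a))%:R * G l + ([&& b == L & i == r] && (l == s))%:R * H l.
  move=> l.
  have eu : (pos (b, i, l) == u) = [&& b, i == a & true] && (l == a).
    by rewrite /u (inj_eq posI) !xpair_eqE andbT; case: b.
  have ev : (pos (b, i, l) == v) = [&& b == L & i == r] && (l == s).
    by rewrite /v (inj_eq posI) !xpair_eqE.
  rewrite -eu -ev.
  case: (eqVneq (pos (b, i, l)) u) => [e|ne].
    rewrite e huv mul1r mul0r addr0 /G; clear G H; case: n => [|n'].
      by apply: cXM0; rewrite Mm_eval eqxx muln0 add0n eq_sym huv.
    by rewrite mulmS -addmA cXM1.
  case: (eqVneq (pos (b, i, l)) v) => [e|ne2].
    by rewrite e mul0r mul1r add0r addmC cXM1.
  rewrite !mul0r addr0; apply: cXM0.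
  by rewrite Mm_eval [v == _]eq_sym (negbTE ne2) addn0 eq_sym (negbTE ne).
rewrite (eq_bigr _ (fun l _ => pt l)) big_split /= !sum_pick.
rewrite big_ord_recl /= addrC.
congr (_ + _).
  rewrite /H /u Acoef // -natrM mulnb; apply: natb_eq.
  rewrite /sn /= eqseq_cons nseq_all /cnd /= eqSS -size_eq0 [(0 == _)%N]eq_sym.
  case: (b == L); case: (i == r); rewrite ?andbF //=.
  case: (size w) => [|m] /=.
    by rewrite andbT [0%N == n]eq_sym [j == s]eq_sym.
  rewrite [_.+1 == n]eq_sym; case: (eqVneq s a) => [->|]; last by rewrite !andbF.
  by rewrite [a == j]eq_sym /= andbT.
clear pt.
case: b; last first.
  rewrite mul0r big1 // => l _; by rewrite bump0n /sn /= andbF.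
case: (eqVneq i a) => [->|hia]; last first.
  rewrite andbF mul0r big1 // => l _.
  by rewrite bump0n cndS ?ltn_ord // (negbTE hia) /= !andbF.
rewrite /= mul1r /G; case: n IH {G H} => [|n] IH.
  apply/esym/big1 => l _.
  by rewrite eqSS (gtn_eqF (leq_ltn_trans (leq0n l) (ltn_ord l))).
rewrite IH; apply: eq_bigr => l _; apply: natb_eq.
by rewrite bump0n eqSS /sn /= eqseq_cons eqxx cndS ?ltn_ord // eqxx.
Qed.

Lemma size_sn t l L : (l < t)%N -> size (sn t l L) = t.
Proof. by move=> h; rewrite /sn size_set_nth size_nseq; apply/maxn_idPr. Qed.

Lemma tuple_pick (R : realFieldType) t (s : seq bool) (hs : size s == t) (c : bool)
  (F : seq bool -> R) :
  \sum_(w : t.-tuple bool) F w * ((w == s :> seq bool) && c)%:R = c%:R * F s.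
Proof.
rewrite (bigD1 (Tuple hs)) // big1 ?addr0.
  rewrite [X in (X == s)](_ : _ = s) // eqxx; apply: etrans (addr0 _) _; rewrite mulrC; exact: erefl.
move=> w /andP [_ hw]; rewrite (_ : (val w == s) = false) ?mulr0 //.
apply/negbTE; apply: contra hw => /eqP e; apply/eqP/val_inj; exact: e.
Qed.

Lemma sum_only (R : realFieldType) n (m0 : 'I_n) (F : 'I_n -> R) :
  (forall m, m != m0 -> F m = 0) -> \sum_m F m = F m0.
Proof. by move=> h; rewrite (bigD1 m0) //= big1 ?addr0. Qed.

Lemma cform (R : realFieldType) k (pos : bool * 'I_k * 'I_k -> 'I_(2 * k ^ 2))
  (posI : injective pos) (p : ncpoly R) d t (a : 'I_k) (L : bool) (r s : 'I_k)
  (hv : pos (L, r, s) != pos (true, a, a)) (htd : (t <= d)%N) (ht : (0 < t)%N) i j :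
  coef2 (ncentry pos p d i j) (pos (true, a, a)) t.-1 (pos (L, r, s)) =
  \sum_(l < t) (cnd a r s l t i j)%:R * p (sn t l L).
Proof.
rewrite /coef2 /ncentry raddf_sum.
rewrite (eq_bigr (fun m : 'I_d.+1 => \sum_(w : m.-tuple bool) p w *
   \sum_(l < m) [&& (m == t :> nat), w == sn m l L :> seq bool & cnd a r s l m i j]%:R)); last first.
  move=> m _; rewrite raddf_sum; apply: eq_bigr => w _.
  apply: etrans (mcoeffZ _ _ _) _.
  by rewrite Bcoef // prednK // size_tuple.
have htd' : (t < d.+1)%N by [].
rewrite (@sum_only _ _ (Ordinal htd')); last first.
  move=> m hm; apply: big1 => w _; rewrite big1 ?mulr0 // => l _.
  suff -> : (nat_of_ord m == t) = false by [].
  apply/negbTE; apply: contra hm => /eqP e; apply/eqP/val_inj; exact: e.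
change (\sum_(w : t.-tuple bool) p w * \sum_(l < t) [&& t == t, w == sn t l L :> seq bool & cnd a r s l t i j]%:R = \sum_(l < t) (cnd a r s l t i j)%:R * p (sn t l L)).
rewrite (eq_bigr (fun w : t.-tuple bool => \sum_(l < t) p w * ((w == sn t l L :> seq bool) && cnd a r s l t i j)%:R)); last first.
  by move=> w _; rewrite big_distrr; apply: eq_bigr => l _; rewrite eqxx.
rewrite exchange_big; apply: eq_bigr => l _.
by rewrite (@tuple_pick _ _ (sn t l L)) // size_sn.
Qed.

Lemma sn_last m L : sn m.+1 m L = rcons (nseq m true) L.
Proof. by elim: m => //= m IH; rewrite -IH. Qed.

Lemma cval (R : realFieldType) k (pos : bool * 'I_k * 'I_k -> 'I_(2 * k ^ 2))
  (posI : injective pos) (p : ncpoly R) d t (a : 'I_k) (L : bool) (r s : 'I_k)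
  (hv : pos (L, r, s) != pos (true, a, a)) (htd : (t <= d)%N) (ht : (2 <= t)%N) i j :
  coef2 (ncentry pos p d i j) (pos (true, a, a)) t.-1 (pos (L, r, s)) =
  if (r == a) && (s == a) then ((i == a) && (j == a))%:R * \sum_(l < t) p (sn t l L)
  else [&& i == r, s == a & j == a]%:R * p (L :: nseq t.-1 true)
     + [&& i == a, r == a & j == s]%:R * p (rcons (nseq t.-1 true) L).
Proof.
rewrite cform //; last by apply: leq_trans ht.
case: ifP => [/andP [/eqP -> /eqP ->] | hrs].
  rewrite big_distrr; apply: eq_bigr => l _; congr (_ * _); apply: natb_eq.
  by rewrite /cnd eqxx; case: (l == 0 :> nat); case: (l == t.-1 :> nat); rewrite ?andbT.
case: t ht htd => [|[|t']] // _ _.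
rewrite big_ord_recl big_ord_recr /= big1 ?add0r; last first.
  move=> l _; rewrite /cnd /= bump0n /=.
  rewrite (_ : (l.+1 == t'.+1)%N = false); last by rewrite eqSS ltn_eqF.
  move: hrs; case: (r == a); case: (s == a) => //= _; try (rewrite !andbF /=; exact: mul0r).
rewrite bump0n sn_last; congr (_ + _).
congr (_ * _); apply: natb_eq; by rewrite /cnd /= eqxx -andbA.
Qed.

Lemma ind_one (R : realFieldType) (w : seq bool) n : size w = n ->
  ((count id w + 1 == n)%N%:R : R) = \sum_(l < n) (w == sn n l false)%:R.
Proof.
elim: w n => [|b w IH] n <-; first by rewrite big_ord0.
rewrite big_ord_recl /=.
rewrite (eq_bigr (fun l : 'I_(size w) => (b && (w == sn (size w) l false))%:R)); last first.
  by move=> l _; rewrite bump0n /sn /= eqseq_cons; case: b.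
case: b => /=.
  by rewrite add0r -(IH (size w)).
rewrite big1 ?addr0 //; apply: natb_eq.
by rewrite /sn /= eqseq_cons /= nseq_all addn1 eqSS add0n -all_count.
Qed.

Lemma sum_phi (R : realFieldType) (p : ncpoly R) t : (0 < t)%N ->
  \sum_(l < t) p (sn t l false) = phi p t.-1 1.
Proof.
case: t => // t _; rewrite /phi /= addn1 [RHS]big_mkcond /=.
rewrite [RHS](eq_bigr (fun w : t.+1.-tuple bool => \sum_(l < t.+1) p w * ((w == sn t.+1 l false :> seq bool) && true)%:R)); last first.
  move=> w _; rewrite -big_distrr /=.
  rewrite (eq_bigr (fun l : 'I_t.+1 => (w == sn t.+1 l false :> seq bool)%:R)); last by move=> l _; rewrite andbT.
  rewrite -ind_one ?size_tuple // addn1 eqSS.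
  by case: (count id w == t); rewrite ?mulr1 ?mulr0.
rewrite exchange_big /=; apply: eq_bigr => l _.
by rewrite (@tuple_pick _ _ (sn t.+1 l false)) ?size_sn // mul1r.
Qed.


Lemma isX_pos k (pos : bool * 'I_k * 'I_k -> 'I_(2 * k ^ 2)) (posI : injective pos) L r s :
  isXentry pos (pos (L, r, s)) = L.
Proof.
apply/existsP/idP => [[i /existsP [j /eqP /posI [e _ _]]]|hL]; first by rewrite -e.
by exists r; apply/existsP; exists s; rewrite hL.
Qed.

Lemma isYo_pos k (pos : bool * 'I_k * 'I_k -> 'I_(2 * k ^ 2)) (posI : injective pos) L r s :
  isYoffdiag pos (pos (L, r, s)) = ~~ L && (r != s).
Proof.
apply/existsP/idP => [[i /existsP [j /andP [hij /eqP /posI e]]]|/andP [hL hrs]].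
  by case: e => <- <- <-.
by exists r; apply/existsP; exists s; case: L hL => //= _; rewrite hrs eqxx.
Qed.

Lemma isYd_pos k (pos : bool * 'I_k * 'I_k -> 'I_(2 * k ^ 2)) (posI : injective pos) L r s :
  isYdiag pos (pos (L, r, s)) = ~~ L && (r == s).
Proof.
apply/existsP/idP => [[i /eqP /posI e]|/andP [hL /eqP ->]].
  by case: e => <- <- <-; rewrite eqxx.
by exists s; case: L hL => //= _; rewrite eqxx.
Qed.

Definition FF (R : realFieldType) k (a : 'I_k) (d1 d2 d3 ph : R) (i j : 'I_k) (L : bool) (r s : 'I_k) : R :=
  if (r == a) && (s == a) then ((i == a) && (j == a) && ~~ L)%:R * ph
  else [&& i == r, s == a & j == a]%:R * (if L then d1 else d3)
     + [&& i == a, r == a & j == s]%:R * (if L then d1 else d2).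

Ltac sm := rewrite /= ?andbF ?andbT ?orbF ?mulr0n ?mulr1n ?mul0r ?mul1r ?add0r ?addr0.

Lemma nu_pos k (pos : bool * 'I_k * 'I_k -> 'I_(2 * k ^ 2)) (posI : injective pos) (a : 'I_k) L r s :
  (pos (L, r, s) == pos (true, a, a)) = [&& L, r == a & s == a].
Proof. by rewrite (inj_eq posI) !xpair_eqE andbA; case: L. Qed.

Lemma part6 (R : realFieldType) (k : nat)
  (pos : bool * 'I_k * 'I_k -> 'I_(2 * k ^ 2)) (g : 'I_(2 * k ^ 2) -> bool * 'I_k * 'I_k)
  (posI : injective pos) (gK : cancel g pos) (d1 d2 d3 ph : R) (a : 'I_k)
  (c : 'I_k -> 'I_k -> 'I_(2 * k ^ 2) -> R)
  (cF : forall i j L r s, pos (L, r, s) != pos (true, a, a) -> c i j (pos (L, r, s)) = FF a d1 d2 d3 ph i j L r s)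
  (b : 'I_k) (hb : b != a) :
     [/\ c a b (pos (true, a, b)) = d1,
         c a b (pos (false, a, b)) = d2 &
         (forall v, v != pos (true, a, a) -> v != pos (true, a, b) -> v != pos (false, a, b) ->
            c a b v = 0)] /\
     [/\ c b a (pos (true, b, a)) = d1,
         c b a (pos (false, b, a)) = d3 &
         (forall v, v != pos (true, a, a) -> v != pos (true, b, a) -> v != pos (false, b, a) ->
            c b a v = 0)].
Proof.
have hb' : (a == b) = false by rewrite eq_sym (negbTE hb).
split; split.
- by rewrite cF ?nu_pos ?(negbTE hb) ?andbF // /FF !eqxx (negbTE hb); sm.
- by rewrite cF ?nu_pos ?(negbTE hb) ?andbF // /FF !eqxx (negbTE hb); sm.
- move=> v; rewrite -(gK v); case: (g v) => [[L r] s] hu h1 h2.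
  rewrite cF // /FF (negbTE hb) !andbF /=; case: ifP => _; sm; first done.
  case: (eqVneq r a) => [er|_]; last by rewrite /= ?andbF; sm.
  case: (eqVneq b s) => [es|_]; last by rewrite /= ?andbF; sm.
  by move: hu h1 h2; rewrite er -es; case: L; rewrite eqxx.
- by rewrite cF ?nu_pos ?(negbTE hb) // /FF !eqxx (negbTE hb); sm.
- by rewrite cF ?nu_pos ?(negbTE hb) // /FF !eqxx (negbTE hb); sm.
- move=> v; rewrite -(gK v); case: (g v) => [[L r] s] hu h1 h2.
  rewrite cF // /FF (negbTE hb) /=; case: ifP => _; first by rewrite ?andbF; sm.
  sm.
  case: (eqVneq s a) => [es|_]; last by rewrite /= ?andbF; sm.
  case: (eqVneq b r) => [er|_]; last by rewrite /= ?andbF; sm.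
  by move: hu h1 h2; rewrite es -er; case: L; rewrite eqxx.
Qed.

Lemma part5 (R : realFieldType) (k : nat)
  (pos : bool * 'I_k * 'I_k -> 'I_(2 * k ^ 2)) (g : 'I_(2 * k ^ 2) -> bool * 'I_k * 'I_k)
  (posI : injective pos) (gK : cancel g pos) (d1 d2 d3 ph : R) (a : 'I_k)
  (c : 'I_k -> 'I_k -> 'I_(2 * k ^ 2) -> R)
  (cF : forall i j L r s, pos (L, r, s) != pos (true, a, a) -> c i j (pos (L, r, s)) = FF a d1 d2 d3 ph i j L r s) :
  (forall (i j : 'I_k) (v : 'I_(2 * k ^ 2)), v != pos (true, a, a) -> c i j v != 0 ->
     [|| isXentry pos v && (c i j v == d1),
         isYoffdiag pos v && ((c i j v == d2) || (c i j v == d3)) |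
         isYdiag pos v && (c i j v == ph)]).
Proof.
move=> i j v; rewrite -(gK v); case: (g v) => [[L r] s] hu.
rewrite isX_pos // isYo_pos // isYd_pos // cF // /FF; move: hu; rewrite nu_pos //.
case: L => /=.
  case: (eqVneq s a) => [->|_]; rewrite ?andbT ?andbF.
    move=> /negbTE hr; rewrite hr /=; sm.
    by case: (i == r); case: (j == a); sm; rewrite ?eqxx.
  move=> _; sm.
  by case: (i == a); case: (r == a); case: (j == s); sm; rewrite ?eqxx.
move=> _.
case: (eqVneq r a) => [->|hr]; case: (eqVneq s a) => [->|hs]; rewrite /= ?eqxx /=.
- by case: (i == a); case: (j == a); sm; rewrite ?eqxx.
- rewrite ?andbF; sm.
  by case: (i == a); case: (j == s); sm; rewrite ?eqxx ?orbT.
- rewrite ?andbF; sm; rewrite ?hr /=.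
  by case: (i == r); case: (j == a); sm; rewrite ?eqxx ?orbT.
- rewrite ?andbF; sm; by rewrite eqxx.
Qed.

Lemma part1 (R : realFieldType) (k : nat)
  (pos : bool * 'I_k * 'I_k -> 'I_(2 * k ^ 2)) (g : 'I_(2 * k ^ 2) -> bool * 'I_k * 'I_k)
  (posI : injective pos) (gK : cancel g pos) (d1 d2 d3 ph : R) (a : 'I_k)
  (c : 'I_k -> 'I_k -> 'I_(2 * k ^ 2) -> R)
  (cF : forall i j L r s, pos (L, r, s) != pos (true, a, a) -> c i j (pos (L, r, s)) = FF a d1 d2 d3 ph i j L r s)
  (hk : (1 <= k)%N) (hd1 : d1 != 0) :
  #|[set z : 'I_k * 'I_k * 'I_(2 * k ^ 2) |
     [&& isXentry pos z.2, z.2 != pos (true, a, a) & c z.1.1 z.1.2 z.2 == d1]]| = (2 * k - 2)%N.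
Proof.
have hd1' : (0 == d1) = false by rewrite eq_sym (negbTE hd1).
pose f (x : bool * 'I_k) := if x.1 then (x.2, a, pos (true, x.2, a)) else (a, x.2, pos (true, a, x.2)).
pose S := setX [set: bool] [set~ a].
have -> : [set z : 'I_k * 'I_k * 'I_(2 * k ^ 2) |
     [&& isXentry pos z.2, z.2 != pos (true, a, a) & c z.1.1 z.1.2 z.2 == d1]] = f @: S.
  apply/setP => [[[i j] v]]; rewrite -(gK v); case: (g v) => [[L r] s].
  have mem : ((i, j, pos (L, r, s)) \in f @: S) =
     L && ([&& i == r, s == a, j == a & r != a] || [&& i == a, r == a, j == s & s != a]).
    apply/imsetP/idP => [[[b x]] hx|].
      move: hx; rewrite !inE /= => hx.
      case: b => /= [[-> -> /posI [-> -> ->]] | [-> -> /posI [-> -> ->]]].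
        by rewrite !eqxx hx.
      by rewrite !eqxx hx orbT.
    case/andP => -> /orP [/and4P [/eqP -> /eqP -> /eqP -> hr] | /and4P [/eqP -> /eqP -> /eqP -> hs]].
      by exists (true, r); rewrite // !inE.
    by exists (false, s); rewrite // !inE.
  rewrite mem inE /= isX_pos // nu_pos //.
  clear mem; case: L => //=.
  case: (eqVneq r a) => [->|hr]; case: (eqVneq s a) => [->|hs]; rewrite /= ?eqxx //=.
  - by rewrite !andbF.
  - rewrite cF ?nu_pos ?(negbTE hs) ?andbF // /FF eqxx (negbTE hs) /=.
    by case: (i == a); case: (j == s); sm; rewrite ?eqxx ?hd1'.
  - rewrite cF ?nu_pos ?(negbTE hr) // /FF eqxx (negbTE hr) /=.
    by case: (i == r); case: (j == a); sm; rewrite ?eqxx ?hd1'.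
  - rewrite cF ?nu_pos ?(negbTE hr) // /FF (negbTE hr) (negbTE hs) /=.
    by sm; rewrite ?hd1'.
rewrite card_in_imset; last first.
  move=> [b x] [b' x']; rewrite !inE /= => hx hx'.
  case: b; case: b' => /=.
  - by move=> [->].
  - by move=> [e1 e2]; rewrite e1 eqxx in hx.
  - by move=> [e1 e2]; rewrite e2 eqxx in hx.
  - by case=> ->.
rewrite cardsX cardsT card_bool cardsC1 card_ord.
by rewrite -subn1 mulnBr muln1.
Qed.

Lemma part2 (R : realFieldType) (k : nat)
  (pos : bool * 'I_k * 'I_k -> 'I_(2 * k ^ 2)) (g : 'I_(2 * k ^ 2) -> bool * 'I_k * 'I_k)
  (posI : injective pos) (gK : cancel g pos) (d1 d2 d3 ph : R) (a : 'I_k)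
  (c : 'I_k -> 'I_k -> 'I_(2 * k ^ 2) -> R)
  (cF : forall i j L r s, pos (L, r, s) != pos (true, a, a) -> c i j (pos (L, r, s)) = FF a d1 d2 d3 ph i j L r s)
  (n23 : d2 != d3) (hd2 : d2 != 0) :
  #|[set z : 'I_k * 'I_k * 'I_(2 * k ^ 2) |
                 isYoffdiag pos z.2 && (c z.1.1 z.1.2 z.2 == d2)]| = k.-1.
Proof.
have hd2' : (0 == d2) = false by rewrite eq_sym (negbTE hd2).
have n32 : (d3 == d2) = false by rewrite eq_sym (negbTE n23).
pose h (x : 'I_k) := (a, x, pos (false, a, x)).
have -> : [set z : 'I_k * 'I_k * 'I_(2 * k ^ 2) |
                 isYoffdiag pos z.2 && (c z.1.1 z.1.2 z.2 == d2)] = h @: [set~ a].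
  apply/setP => [[[i j] v]]; rewrite -(gK v); case: (g v) => [[L r] s].
  have mem : ((i, j, pos (L, r, s)) \in h @: [set~ a]) = [&& ~~ L, i == a, r == a, j == s & s != a].
    apply/imsetP/idP => [[x hx [-> -> /posI [-> -> ->]]]|].
      by move: hx; rewrite !inE /= !eqxx => ->.
    case/and5P => /negbTE -> /eqP -> /eqP -> /eqP -> hs.
    by exists s; rewrite // !inE.
  rewrite mem inE /= isYo_pos //.
  clear mem; case: L => //=.
  rewrite cF ?nu_pos // /FF.
  case: (eqVneq r a) => [->|hr]; case: (eqVneq s a) => [->|hs]; rewrite /= ?eqxx //=.
  - by rewrite !andbF.
  - by case: (i == a); case: (j == s); sm; rewrite ?eqxx ?hd2'.
  - by case: (i == r); case: (j == a); sm; rewrite ?n32 ?hd2' ?andbF.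
  - by sm; rewrite ?hd2' ?andbF.
rewrite card_imset ?cardsC1 ?card_ord //.
by move=> x y [->].
Qed.

Lemma part3 (R : realFieldType) (k : nat)
  (pos : bool * 'I_k * 'I_k -> 'I_(2 * k ^ 2)) (g : 'I_(2 * k ^ 2) -> bool * 'I_k * 'I_k)
  (posI : injective pos) (gK : cancel g pos) (d1 d2 d3 ph : R) (a : 'I_k)
  (c : 'I_k -> 'I_k -> 'I_(2 * k ^ 2) -> R)
  (cF : forall i j L r s, pos (L, r, s) != pos (true, a, a) -> c i j (pos (L, r, s)) = FF a d1 d2 d3 ph i j L r s)
  (n23 : d2 != d3) (hd3 : d3 != 0) :
  #|[set z : 'I_k * 'I_k * 'I_(2 * k ^ 2) |
                 isYoffdiag pos z.2 && (c z.1.1 z.1.2 z.2 == d3)]| = k.-1.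
Proof.
have hd3' : (0 == d3) = false by rewrite eq_sym (negbTE hd3).
have n23' : (d2 == d3) = false by rewrite (negbTE n23).
pose h (x : 'I_k) := (x, a, pos (false, x, a)).
have -> : [set z : 'I_k * 'I_k * 'I_(2 * k ^ 2) |
                 isYoffdiag pos z.2 && (c z.1.1 z.1.2 z.2 == d3)] = h @: [set~ a].
  apply/setP => [[[i j] v]]; rewrite -(gK v); case: (g v) => [[L r] s].
  have mem : ((i, j, pos (L, r, s)) \in h @: [set~ a]) = [&& ~~ L, i == r, s == a, j == a & r != a].
    apply/imsetP/idP => [[x hx [-> -> /posI [-> -> ->]]]|].
      by move: hx; rewrite !inE /= !eqxx => ->.
    case/and5P => /negbTE -> /eqP -> /eqP -> /eqP -> hr.
    by exists r; rewrite // !inE.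
  rewrite mem inE /= isYo_pos //.
  clear mem; case: L => //=.
  rewrite cF ?nu_pos // /FF.
  case: (eqVneq r a) => [->|hr]; case: (eqVneq s a) => [->|hs]; rewrite /= ?eqxx //=.
  - by rewrite !andbF.
  - by case: (i == a); case: (j == s); sm; rewrite ?n23' ?hd3' ?andbF.
  - by rewrite hr; case: (i == r); case: (j == a); sm; rewrite ?eqxx ?hd3'.
  - by sm; rewrite ?hd3' ?andbF.
rewrite card_imset ?cardsC1 ?card_ord //.
by move=> x y [->].
Qed.

Lemma part4 (R : realFieldType) (k : nat)
  (pos : bool * 'I_k * 'I_k -> 'I_(2 * k ^ 2)) (g : 'I_(2 * k ^ 2) -> bool * 'I_k * 'I_k)
  (posI : injective pos) (gK : cancel g pos) (d1 d2 d3 ph : R) (a : 'I_k)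
  (c : 'I_k -> 'I_k -> 'I_(2 * k ^ 2) -> R)
  (cF : forall i j L r s, pos (L, r, s) != pos (true, a, a) -> c i j (pos (L, r, s)) = FF a d1 d2 d3 ph i j L r s)
  (hph : ph != 0) :
  #|[set z : 'I_k * 'I_k * 'I_(2 * k ^ 2) |
                 isYdiag pos z.2 && (c z.1.1 z.1.2 z.2 == ph)]| = 1%N.
Proof.
have hph' : (0 == ph) = false by rewrite eq_sym (negbTE hph).
have -> : [set z : 'I_k * 'I_k * 'I_(2 * k ^ 2) |
                 isYdiag pos z.2 && (c z.1.1 z.1.2 z.2 == ph)] = [set (a, a, pos (false, a, a))].
  apply/setP => [[[i j] v]]; rewrite -(gK v); case: (g v) => [[L r] s].
  rewrite in_set1 !xpair_eqE (inj_eq posI) !xpair_eqE inE /= isYd_pos //.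
  case: L => //=; first by rewrite !andbF.
  rewrite cF ?nu_pos // /FF.
  case: (eqVneq r a) => [->|hr]; case: (eqVneq s a) => [->|hs]; rewrite /= ?eqxx //=.
  - by case: (i == a); case: (j == a); sm; rewrite ?eqxx ?hph'.
  - by rewrite !andbF.
  - by rewrite (negbTE hr) !andbF.
  - by sm; rewrite ?hph' ?andbF.
by rewrite cards1.
Qed.

Lemma final (R : realFieldType) (k : nat)
  (pos : bool * 'I_k * 'I_k -> 'I_(2 * k ^ 2)) (g : 'I_(2 * k ^ 2) -> bool * 'I_k * 'I_k)
  (posK : cancel pos g) (gK : cancel g pos) (d1 d2 d3 ph : R) :
  (1 <= k)%N -> d1 != d2 -> d1 != d3 -> d2 != d3 ->
  forall (a : 'I_k) (c : 'I_k -> 'I_k -> 'I_(2 * k ^ 2) -> R),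
  let u := pos (true, a, a) in
  (forall i j L r s, pos (L, r, s) != u -> c i j (pos (L, r, s)) = FF a d1 d2 d3 ph i j L r s) ->
  (d1 != 0 -> #|[set z : 'I_k * 'I_k * 'I_(2 * k ^ 2) |
                 [&& isXentry pos z.2, z.2 != u & c z.1.1 z.1.2 z.2 == d1]]|
              = (2 * k - 2)%N) /\
  (d2 != 0 -> #|[set z : 'I_k * 'I_k * 'I_(2 * k ^ 2) |
                 isYoffdiag pos z.2 && (c z.1.1 z.1.2 z.2 == d2)]| = k.-1) /\
  (d3 != 0 -> #|[set z : 'I_k * 'I_k * 'I_(2 * k ^ 2) |
                 isYoffdiag pos z.2 && (c z.1.1 z.1.2 z.2 == d3)]| = k.-1) /\
  (ph != 0 -> #|[set z : 'I_k * 'I_k * 'I_(2 * k ^ 2) |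
                 isYdiag pos z.2 && (c z.1.1 z.1.2 z.2 == ph)]| = 1%N) /\
  (forall (i j : 'I_k) (v : 'I_(2 * k ^ 2)), v != u -> c i j v != 0 ->
     [|| isXentry pos v && (c i j v == d1),
         isYoffdiag pos v && ((c i j v == d2) || (c i j v == d3)) |
         isYdiag pos v && (c i j v == ph)]) /\
  (forall b : 'I_k, b != a ->
     [/\ c a b (pos (true, a, b)) = d1,
         c a b (pos (false, a, b)) = d2 &
         (forall v, v != u -> v != pos (true, a, b) -> v != pos (false, a, b) ->
            c a b v = 0)] /\
     [/\ c b a (pos (true, b, a)) = d1,
         c b a (pos (false, b, a)) = d3 &
         (forall v, v != u -> v != pos (true, b, a) -> v != pos (false, b, a) ->
            c b a v = 0)]).
Proof.
move=> hk n12 n13 n23 a c u cF.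
have posI := can_inj posK.
split; first by move=> h; exact: (@part1 R k pos g posI gK d1 d2 d3 ph a c cF hk h).
split; first by move=> h; exact: (@part2 R k pos g posI gK d1 d2 d3 ph a c cF n23 h).
split; first by move=> h; exact: (@part3 R k pos g posI gK d1 d2 d3 ph a c cF n23 h).
split; first by move=> h; exact: (@part4 R k pos g posI gK d1 d2 d3 ph a c cF h).
split; first exact: (@part5 R k pos g posI gK d1 d2 d3 ph a c cF).
move=> b hb; exact: (@part6 R k pos g posI gK d1 d2 d3 ph a c cF b hb).
Qed.

Lemma rcons_nseq n (x : bool) : rcons (nseq n x) x = nseq n.+1 x.
Proof. by elim: n => //= n ->. Qed.

Theorem lemma2p12 (R : realFieldType) (k : nat)
  (pos : bool * 'I_k * 'I_k -> 'I_(2 * k ^ 2))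
  (p : ncpoly R) (d t : nat) (d1 d2 d3 : R) :
  (1 <= k)%N ->
  bijective pos ->
  ncdeg p d -> (1 < d)%N ->
  (2 <= t)%N ->
  p (nseq t true) = d1 ->
  p (rcons (nseq t.-1 true) false) = d2 ->
  p (false :: nseq t.-1 true) = d3 ->
  d1 != d2 -> d1 != d3 -> d2 != d3 ->
  forall a : 'I_k,
  let u := pos (true, a, a) in
  let c := fun (i j : 'I_k) (v : 'I_(2 * k ^ 2)) =>
             coef2 (ncentry pos p d i j) u t.-1 v in
  (* counts of terms (over all polynomials p_ij) of each kind *)
  (d1 != 0 -> #|[set z : 'I_k * 'I_k * 'I_(2 * k ^ 2) |
                 [&& isXentry pos z.2, z.2 != u & c z.1.1 z.1.2 z.2 == d1]]|
              = (2 * k - 2)%N) /\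
  (d2 != 0 -> #|[set z : 'I_k * 'I_k * 'I_(2 * k ^ 2) |
                 isYoffdiag pos z.2 && (c z.1.1 z.1.2 z.2 == d2)]| = k.-1) /\
  (d3 != 0 -> #|[set z : 'I_k * 'I_k * 'I_(2 * k ^ 2) |
                 isYoffdiag pos z.2 && (c z.1.1 z.1.2 z.2 == d3)]| = k.-1) /\
  (phi p t.-1 1 != 0 -> #|[set z : 'I_k * 'I_k * 'I_(2 * k ^ 2) |
                 isYdiag pos z.2 && (c z.1.1 z.1.2 z.2 == phi p t.-1 1)]| = 1%N) /\
  (* these account for all two-letter terms x_u^(t-1) x_v of degree t *)
  (forall (i j : 'I_k) (v : 'I_(2 * k ^ 2)), v != u -> c i j v != 0 ->
     [|| isXentry pos v && (c i j v == d1),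
         isYoffdiag pos v && ((c i j v == d2) || (c i j v == d3)) |
         isYdiag pos v && (c i j v == phi p t.-1 1)]) /\
  (* shape of p_ab and p_ba for b <> a *)
  (forall b : 'I_k, b != a ->
     [/\ c a b (pos (true, a, b)) = d1,
         c a b (pos (false, a, b)) = d2 &
         (forall v, v != u -> v != pos (true, a, b) -> v != pos (false, a, b) ->
            c a b v = 0)] /\
     [/\ c b a (pos (true, b, a)) = d1,
         c b a (pos (false, b, a)) = d3 &
         (forall v, v != u -> v != pos (true, b, a) -> v != pos (false, b, a) ->
            c b a v = 0)]).
Proof.
move=> hk [g posK gK] [hdeg _] hd ht e1 e2 e3 n12 n13 n23 a u c.
have posI : injective pos := can_inj posK.
have htd : (t <= d)%N.
  rewrite leqNgt; apply/negP => hdt; move: n12.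
  rewrite -e1 -e2 !hdeg ?eqxx // ?size_rcons ?size_nseq ?prednK //.
  by apply: leq_trans ht.
apply: (@final R k pos g posK gK d1 d2 d3 (phi p t.-1 1) hk n12 n13 n23 a c).
move=> i j L r s hv; rewrite /c /u cval //.
rewrite /FF; case: ifP => [/andP [/eqP er /eqP es] | _].
  case: L hv; first by rewrite er es eqxx.
  by move=> _; rewrite sum_phi ?andbT //; apply: leq_trans ht.
have ht1 : t = t.-1.+1 by rewrite prednK //; apply: leq_trans ht.
move: hv; case: L => _; rewrite ?e2 ?e3 // ?rcons_nseq -?ht1 ?e1 //.
by rewrite -e1 {3}ht1.
Qed.
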